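(* Let $n\ge 1$ be an integer and let $a_i(x)$, $0\le i\le n-1$, be real continuous functions on an open interval $I=(a,b)$. Then there exists a solution $y$ on $I$ of the linear ordinary differential equation $$y^{(n)}+a_{n-1}(x)\,y^{(n-1)}+\cdots+a_0(x)\,y=0$$ such that $y, y', \ldots, y^{(n-1)}$ are linearly independent over $I$.
   Context: Linear independence over $I$ means that no nontrivial real linear combination of the functions vanishes identically on $I$. *)

(* Defs.v *)
From Stdlib Require Import Reals.
From Coquelicot Require Import Coquelicot.
Open Scope R_scope.

Fixpoint sum_lt (n : nat) (f : nat -> R) : R :=
  match n with
  | O => 0
  | S m => sum_lt m f + f m
  end.

Definition in_interval (a b : Rbar) (x : R) : Prop :=
  Rbar_lt a x /\ Rbar_lt x b.

Definition n_times_differentiable_on (n : nat) (a b : Rbar) (y : R -> R) : Prop :=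
  forall k : nat, (k < n)%nat ->
    forall x : R, in_interval a b x -> ex_derive (Derive_n y k) x.

Definition is_solution (n : nat) (coef : nat -> R -> R) (a b : Rbar) (y : R -> R) : Prop :=
  n_times_differentiable_on n a b y /\
  forall x : R, in_interval a b x ->
    Derive_n y n x + sum_lt n (fun i => coef i x * Derive_n y i x) = 0.

Definition lin_indep_on (n : nat) (f : nat -> R -> R) (a b : Rbar) : Prop :=
  forall c : nat -> R,
    (forall x : R, in_interval a b x -> sum_lt n (fun i => c i * f i x) = 0) ->
    forall i : nat, (i < n)%nat -> c i = 0.

(* Main.v *)
Require Import Defs.
From Stdlib Require Import Reals Lra Lia.
From Coquelicot Require Import Coquelicot.
Open Scope R_scope.


Lemma in_interval_convex (a b : Rbar) (u v w : R) :
  in_interval a b u -> in_interval a b w -> u <= v <= w -> in_interval a b v.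
Proof.
  unfold in_interval; destruct a as [ra| |], b as [rb| |]; simpl; intros; lra.
Qed.

Lemma in_interval_nonempty (a b : Rbar) : Rbar_lt a b -> exists x, in_interval a b x.
Proof.
  unfold in_interval; destruct a as [ra| |], b as [rb| |]; simpl; intros H;
   try contradiction.
  - exists ((ra+rb)/2); lra.
  - exists (ra+1); lra.
  - exists (rb-1); lra.
  - exists 0; tauto.
Qed.

Lemma in_interval_open (a b : Rbar) (x : R) : in_interval a b x ->
  exists d, 0 < d /\ in_interval a b (x - d) /\ in_interval a b (x + d).
Proof.
  unfold in_interval; destruct a as [ra| |], b as [rb| |]; simpl; intros [H1 H2];
   try contradiction.
  - exists (Rmin (x - ra) (rb - x) / 2).
    assert (Rmin (x - ra) (rb - x) <= x - ra) by apply Rmin_l.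
    assert (Rmin (x - ra) (rb - x) <= rb - x) by apply Rmin_r.
    assert (0 < Rmin (x - ra) (rb - x)) by (apply Rmin_glb_lt; lra).
    lra.
  - exists ((x - ra)/2); lra.
  - exists ((rb - x)/2); lra.
  - exists 1; lra.
Qed.

Lemma in_interval_locally (a b : Rbar) (x : R) : in_interval a b x ->
  locally x (fun t => in_interval a b t).
Proof.
  intros [H1 H2]. apply (locally_interval _ x a b); auto.
  intros y Hy1 Hy2; split; auto.
Qed.

Lemma sum_lt_ext (m : nat) (f g : nat -> R) :
  (forall k, (k < m)%nat -> f k = g k) -> sum_lt m f = sum_lt m g.
Proof.
  induction m; simpl; intros H; auto.
  rewrite IHm by (intros; apply H; lia). rewrite H by lia. reflexivity.
Qed.

Lemma sum_lt_abs (m : nat) (f : nat -> R) :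
  Rabs (sum_lt m f) <= sum_lt m (fun k => Rabs (f k)).
Proof.
  induction m; simpl.
  - rewrite Rabs_R0; lra.
  - eapply Rle_trans; [apply Rabs_triang|]. lra.
Qed.

Lemma sum_lt_le_const (m : nat) (f : nat -> R) (c : R) :
  (forall k, (k < m)%nat -> f k <= c) -> sum_lt m f <= INR m * c.
Proof.
  induction m; intros H.
  - simpl; lra.
  - cbn [sum_lt]; rewrite S_INR. assert (f m <= c) by (apply H; lia).
    assert (sum_lt m f <= INR m * c) by (apply IHm; intros; apply H; lia). lra.
Qed.

Lemma sum_lt_delta (m p : nat) (c : nat -> R) :
  sum_lt m (fun k => c k * (if Nat.eqb k p then 1 else 0)) =
  if Nat.ltb p m then c p else 0.
Proof.
  induction m; cbn [sum_lt].
  - destruct p; reflexivity.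
  - rewrite IHm. destruct (Nat.eqb m p) eqn:E.
    + apply Nat.eqb_eq in E; subst.
      replace (Nat.ltb p p) with false by (symmetry; apply Nat.ltb_irrefl).
      replace (Nat.ltb p (S p)) with true by (symmetry; apply Nat.ltb_lt; lia). ring.
    + apply Nat.eqb_neq in E.
      destruct (Nat.ltb_spec p m); destruct (Nat.ltb_spec p (S m)); try lia; ring.
Qed.


Definition texp (c : R) (i : nat) : R := / INR (Factorial.fact i) * c ^ i.

Lemma exp_cauchy (c : R) : Cauchy_crit (sum_f_R0 (texp c)).
Proof.
  apply CV_Cauchy. exists (proj1_sig (exist_exp c)).
  exact (proj2_sig (exist_exp c)).
Qed.

Lemma texp_nonneg (c : R) (i : nat) : 0 <= c -> 0 <= texp c i.
Proof.
  intros Hc. unfold texp. apply Rmult_le_pos.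
  - apply Rlt_le, Rinv_0_lt_compat, lt_0_INR, Factorial.lt_O_fact.
  - apply pow_le; auto.
Qed.

Lemma unif_cauchy (f : nat -> R -> R) (D : R -> Prop) (K c : R) :
  0 <= K ->
  (forall k x, D x -> Rabs (f (S k) x - f k x) <= K * texp c (S k)) ->
  CVU_cauchy f D.
Proof.
  intros HK Hb.
  assert (St : forall n d x, D x ->
     Rabs (f (n + d)%nat x - f n x) <= K * (sum_f_R0 (texp c) (n + d) - sum_f_R0 (texp c) n)).
  { intros n d x Hx. induction d.
    - rewrite Nat.add_0_r. unfold Rminus. rewrite !Rplus_opp_r, Rabs_R0. lra.
    - replace (n + S d)%nat with (S (n + d)) by lia. cbn [sum_f_R0].
      specialize (Hb (n + d)%nat x Hx).
      replace (f (S (n + d)) x - f n x) with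
        ((f (S (n + d)) x - f (n + d)%nat x) + (f (n + d)%nat x - f n x)) by ring.
      eapply Rle_trans; [apply Rabs_triang|]. lra. }
  intros eps.
  destruct (exp_cauchy c (eps / (K + 1))) as [N HN].
  { apply Rdiv_lt_0_compat; [apply cond_pos| lra]. }
  exists N. intros n m x Hx Hn Hm.
  assert (Hpos : 0 < eps) by apply cond_pos.
  assert (Hgen : forall p q, (N <= p)%nat -> (p <= q)%nat ->
            Rabs (f q x - f p x) < eps).
  { intros p q Hp Hpq. replace q with (p + (q - p))%nat by lia.
    eapply Rle_lt_trans; [apply St; auto|].
    specialize (HN (p + (q - p))%nat p ltac:(lia) ltac:(lia)).
    unfold Rdist in HN.
    apply Rle_lt_trans with (K * (eps / (K + 1))).
    - apply Rmult_le_compat_l; auto. eapply Rle_trans; [apply Rle_abs| lra].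
    - apply Rlt_le_trans with ((K + 1) * (eps / (K + 1))).
      + apply Rmult_lt_compat_r; [apply Rdiv_lt_0_compat; lra| lra].
      + right; field; lra. }
  destruct (Compare_dec.le_lt_dec n m).
  - rewrite Rabs_minus_sym. apply Hgen; auto.
  - apply Hgen; auto; lia.
Qed.


Lemma int_bound (f : R -> R) (x0 x K : R) (m : nat) :
  0 <= K ->
  (forall s, Rmin x0 x <= s <= Rmax x0 x -> continuous f s) ->
  (forall s, Rmin x0 x <= s <= Rmax x0 x -> Rabs (f s) <= K * Rabs (s - x0) ^ m) ->
  Rabs (RInt f x0 x) <= K * Rabs (x - x0) ^ (S m) / INR (S m).
Proof.
  intros HK Hc Hb.
  assert (HSm : 0 < INR (S m)) by (apply lt_0_INR; lia).
  assert (Hf : ex_RInt f x0 x) by (apply (ex_RInt_continuous (V:=R_CompleteNormedModule)); auto).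
  destruct (Rle_lt_dec x0 x) as [Hle|Hlt].
  - rewrite Rmin_left in Hc, Hb by lra. rewrite Rmax_right in Hc, Hb by lra.
    assert (HP : is_RInt (fun s => K * (s - x0) ^ m) x0 x
                   (K / INR (S m) * (x - x0) ^ (S m))).
    { replace (K / INR (S m) * (x - x0) ^ (S m)) with
        (minus (K / INR (S m) * (x - x0) ^ (S m)) (K / INR (S m) * (x0 - x0) ^ (S m))).
      2:{ unfold minus, plus, opp; simpl. replace (x0 - x0) with 0 by ring. ring. }
      apply (is_RInt_derive (V:=R_CompleteNormedModule) (fun s => K / INR (S m) * (s - x0) ^ (S m))).
      - intros s _. auto_derive; auto. change (match m with 0%nat => 1 | S _ => INR m + 1 end) with (INR (S m)). unfold Rminus. field. lra.
      - intros s _. apply (@ex_derive_continuous R_AbsRing R_NormedModule). auto_derive. auto. }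
    eapply Rle_trans; [apply abs_RInt_le; auto|].
    eapply Rle_trans.
    + apply RInt_le with (g := fun s => K * (s - x0) ^ m); auto.
      * apply (ex_RInt_continuous (V:=R_CompleteNormedModule)). intros s Hs. apply continuous_Rabs_comp.
        apply Hc. rewrite Rmin_left, Rmax_right in Hs by lra. auto.
      * eexists; eauto.
      * intros s Hs. rewrite <- (Rabs_pos_eq (s - x0)) by lra.
        apply Hb; lra.
    + rewrite (is_RInt_unique _ _ _ _ HP). rewrite Rabs_pos_eq by lra.
      right; field; lra.
  - rewrite Rmin_right in Hc, Hb by lra. rewrite Rmax_left in Hc, Hb by lra.
    assert (HP : is_RInt (fun s => K * (x0 - s) ^ m) x x0
                   (K / INR (S m) * (x0 - x) ^ (S m))).
    { replace (K / INR (S m) * (x0 - x) ^ (S m)) with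
        (minus (- (K / INR (S m) * (x0 - x0) ^ (S m))) (- (K / INR (S m) * (x0 - x) ^ (S m)))).
      2:{ unfold minus, plus, opp; simpl. replace (x0 - x0) with 0 by ring. ring. }
      apply (is_RInt_derive (V:=R_CompleteNormedModule) (fun s => - (K / INR (S m) * (x0 - s) ^ (S m)))).
      - intros s _. auto_derive; auto. change (match m with 0%nat => 1 | S _ => INR m + 1 end) with (INR (S m)). unfold Rminus. field. lra.
      - intros s _. apply (@ex_derive_continuous R_AbsRing R_NormedModule). auto_derive. auto. }
    assert (Hf' : ex_RInt f x x0) by (apply ex_RInt_swap; auto).
    rewrite <- (opp_RInt_swap f x x0 Hf').
    unfold opp; simpl. rewrite Rabs_Ropp.
    eapply Rle_trans; [apply abs_RInt_le; auto; lra|].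
    eapply Rle_trans.
    + apply RInt_le with (g := fun s => K * (x0 - s) ^ m); auto; try lra.
      * apply (ex_RInt_continuous (V:=R_CompleteNormedModule)). intros s Hs. apply continuous_Rabs_comp.
        apply Hc. rewrite Rmin_left, Rmax_right in Hs by lra. auto.
      * eexists; eauto.
      * intros s Hs. rewrite <- (Rabs_pos_eq (x0 - s)) by lra. rewrite Rabs_minus_sym.
        apply Hb; lra.
    + rewrite (is_RInt_unique _ _ _ _ HP). rewrite Rabs_minus_sym, Rabs_pos_eq by lra.
      right. change (match m with 0%nat => 1 | S _ => INR m + 1 end) with (INR (S m)). rewrite tech_pow_Rmult. field. lra.
Qed.

Definition ev (n i : nat) : R := if Nat.eqb i (n - 1) then 1 else 0.

Definition Fv (n : nat) (coef : nat -> R -> R) (g : nat -> R -> R) (i : nat) (s : R) : R :=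
  if Nat.ltb i (n - 1) then g (S i) s else - sum_lt n (fun j => coef j s * g j s).

Fixpoint Pic (n : nat) (coef : nat -> R -> R) (x0 : R) (k : nat) : nat -> R -> R :=
  match k with
  | O => fun i _ => ev n i
  | S k' => fun i x => ev n i + RInt (Fv n coef (Pic n coef x0 k') i) x0 x
  end.

Lemma cont_sum (m : nat) (h : nat -> R -> R) (s : R) :
  (forall j, (j < m)%nat -> continuous (h j) s) ->
  continuous (fun t => sum_lt m (fun j => h j t)) s.
Proof.
  induction m; intros H; cbn [sum_lt].
  - apply continuous_const.
  - apply (continuous_plus (fun t => sum_lt m (fun j => h j t)) (h m)).
    + apply IHm; intros; apply H; lia.
    + apply H; lia.
Qed.

Lemma cont_Fv (n : nat) (coef : nat -> R -> R) (g : nat -> R -> R) (s : R) :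
  (1 <= n)%nat ->
  (forall j, (j < n)%nat -> continuous (g j) s) ->
  (forall j, (j < n)%nat -> continuous (coef j) s) ->
  forall i, (i < n)%nat -> continuous (Fv n coef g i) s.
Proof.
  intros Hn Hg Hc i Hi. unfold Fv. destruct (Nat.ltb_spec i (n - 1)).
  - apply Hg; lia.
  - apply (continuous_opp (fun t => sum_lt n (fun j => coef j t * g j t))).
    apply cont_sum. intros j Hj.
    apply (continuous_mult (coef j) (g j)); auto.
Qed.

Lemma deriv_step (n : nat) (coef : nat -> R -> R) (a b : Rbar) (x0 : R)
  (g : nat -> R -> R) :
  (1 <= n)%nat -> in_interval a b x0 ->
  (forall i, (i < n)%nat -> forall x, in_interval a b x -> continuous (coef i) x) ->
  (forall j, (j < n)%nat -> forall s, in_interval a b s -> continuous (g j) s) ->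
  forall i, (i < n)%nat -> forall x, in_interval a b x ->
    is_derive (fun x => ev n i + RInt (Fv n coef g i) x0 x) x (Fv n coef g i x).
Proof.
  intros Hn Hx0 Hc Hg i Hi x Hx.
  assert (HF : forall s, in_interval a b s -> continuous (Fv n coef g i) s).
  { intros s Hs. apply cont_Fv; auto. }
  assert (HE : forall y, in_interval a b y -> ex_RInt (Fv n coef g i) x0 y).
  { intros y Hy. apply (ex_RInt_continuous (V:=R_CompleteNormedModule)).
    intros z Hz. apply HF. apply in_interval_convex with (Rmin x0 y) (Rmax x0 y); auto.
    - unfold Rmin; destruct (Rle_dec x0 y); auto.
    - unfold Rmax; destruct (Rle_dec x0 y); auto. }
  replace (Fv n coef g i x) with (plus 0 (Fv n coef g i x)) by (unfold plus; simpl; ring).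
  apply (is_derive_plus (fun _ => ev n i) (fun x => RInt (Fv n coef g i) x0 x)).
  - apply (@is_derive_const R_AbsRing R_NormedModule).
  - apply (is_derive_RInt (V:=R_CompleteNormedModule) (Fv n coef g i) (fun x => RInt (Fv n coef g i) x0 x) x0 x).
    + generalize (in_interval_locally a b x Hx). apply filter_imp.
      intros y Hy. apply RInt_correct. apply HE; auto.
    + apply HF; auto.
Qed.

Lemma pic_props (n : nat) (coef : nat -> R -> R) (a b : Rbar) (x0 : R) :
  (1 <= n)%nat -> in_interval a b x0 ->
  (forall i, (i < n)%nat -> forall x, in_interval a b x -> continuous (coef i) x) ->
  forall k, (forall j, (j < n)%nat -> forall s, in_interval a b s ->
               continuous (Pic n coef x0 k j) s) /\
            (forall i, (i < n)%nat -> forall x, in_interval a b x ->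
               is_derive (Pic n coef x0 (S k) i) x (Fv n coef (Pic n coef x0 k) i x)).
Proof.
  intros Hn Hx0 Hc. induction k.
  - split.
    + intros j _ s _. apply continuous_const.
    + intros i Hi x Hx. apply (deriv_step n coef a b x0); auto.
      intros j _ s _. apply continuous_const.
  - destruct IHk as [IH1 IH2].
    assert (C : forall j, (j < n)%nat -> forall s, in_interval a b s ->
               continuous (Pic n coef x0 (S k) j) s).
    { intros j Hj s Hs. apply (@ex_derive_continuous R_AbsRing R_NormedModule).
      eexists. apply IH2; auto. }
    split; auto.
    intros i Hi x Hx. apply (deriv_step n coef a b x0); auto.
Qed.


Lemma sum_lt_minus (m : nat) (f g : nat -> R) :
  sum_lt m f - sum_lt m g = sum_lt m (fun k => f k - g k).
Proof. induction m; cbn [sum_lt]; [ring| rewrite <- IHm; ring]. Qed.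

Lemma sum_lt_zero (m : nat) (f : nat -> R) :
  (forall k, (k < m)%nat -> f k = 0) -> sum_lt m f = 0.
Proof.
  induction m; cbn [sum_lt]; intros H; auto.
  rewrite IHm, H by (try intros; try apply H; lia). ring.
Qed.

Lemma Fv_zero (n : nat) (coef : nat -> R -> R) (i : nat) (s : R) :
  Fv n coef (fun _ _ => 0) i s = 0.
Proof.
  unfold Fv. destruct (Nat.ltb i (n - 1)); auto.
  rewrite sum_lt_zero; [ring| intros; ring].
Qed.

Lemma Fdiff (n : nat) (coef : nat -> R -> R) (g h : nat -> R -> R) (s M beta : R) :
  (1 <= n)%nat -> 0 <= M ->
  (forall j, (j < n)%nat -> Rabs (g j s - h j s) <= beta) ->
  (forall j, (j < n)%nat -> Rabs (coef j s) <= M) ->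
  forall i, (i < n)%nat -> Rabs (Fv n coef g i s - Fv n coef h i s) <= (1 + INR n * M) * beta.
Proof.
  intros Hn HM Hb Hc i Hi.
  assert (Hbeta : 0 <= beta) by (eapply Rle_trans; [apply Rabs_pos| apply (Hb 0%nat); lia]).
  assert (HnM : 0 <= INR n * M) by (apply Rmult_le_pos; auto; apply pos_INR).
  unfold Fv. destruct (Nat.ltb_spec i (n - 1)).
  - eapply Rle_trans; [apply Hb; lia|]. nra.
  - replace (- sum_lt n (fun j => coef j s * g j s) - - sum_lt n (fun j => coef j s * h j s))
      with (- (sum_lt n (fun j => coef j s * g j s) - sum_lt n (fun j => coef j s * h j s))) by ring.
    rewrite Rabs_Ropp, sum_lt_minus.
    eapply Rle_trans; [apply sum_lt_abs|].
    eapply Rle_trans; [apply (sum_lt_le_const n _ (M * beta))|].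
    + intros k Hk. replace (coef k s * g k s - coef k s * h k s) with (coef k s * (g k s - h k s)) by ring.
      rewrite Rabs_mult. apply Rmult_le_compat; auto using Rabs_pos.
    + nra.
Qed.

Lemma pic_bound (n : nat) (coef : nat -> R -> R) (a b : Rbar) (x0 lo hi M : R) :
  (1 <= n)%nat -> in_interval a b x0 ->
  (forall i, (i < n)%nat -> forall x, in_interval a b x -> continuous (coef i) x) ->
  in_interval a b lo -> in_interval a b hi -> lo <= x0 <= hi -> 0 <= M ->
  (forall j, (j < n)%nat -> forall s, lo <= s <= hi -> Rabs (coef j s) <= M) ->
  forall k i, (i < n)%nat -> forall x, lo <= x <= hi ->
    Rabs (Pic n coef x0 (S k) i x - Pic n coef x0 k i x) <=
      (1 + INR n * M) ^ (S k) * Rabs (x - x0) ^ (S k) / INR (Factorial.fact (S k)).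
Proof.
  intros Hn Hx0 Hc Hlo Hhi Hlh HM HcM.
  set (L := 1 + INR n * M).
  assert (HL : 1 <= L) by (unfold L; assert (0 <= INR n * M) by (apply Rmult_le_pos; auto; apply pos_INR); lra).
  assert (PP := pic_props n coef a b x0 Hn Hx0 Hc).
  assert (Iseg : forall x s, lo <= x <= hi -> Rmin x0 x <= s <= Rmax x0 x -> lo <= s <= hi).
  { intros x s Hx Hs. unfold Rmin, Rmax in Hs. destruct (Rle_dec x0 x); lra. }
  assert (Iin : forall s, lo <= s <= hi -> in_interval a b s).
  { intros s Hs. apply in_interval_convex with lo hi; auto. }
  assert (ContF : forall k i, (i < n)%nat -> forall s, lo <= s <= hi ->
            continuous (Fv n coef (Pic n coef x0 k) i) s).
  { intros k i Hi s Hs. apply cont_Fv; auto; intros j Hj;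
      first [apply (proj1 (PP k)); auto | apply Hc; auto]. }
  assert (ExF : forall k i, (i < n)%nat -> forall x, lo <= x <= hi ->
            ex_RInt (Fv n coef (Pic n coef x0 k) i) x0 x).
  { intros k i Hi x Hx. apply (ex_RInt_continuous (V:=R_CompleteNormedModule)).
    intros s Hs. apply ContF; eauto. }
  induction k; intros i Hi x Hx.
  - cbn [Pic]. replace (ev n i + RInt (Fv n coef (fun i _ => ev n i) i) x0 x - ev n i)
      with (RInt (Fv n coef (fun i _ => ev n i) i) x0 x)
      by (unfold Rminus; rewrite Rplus_comm, <- Rplus_assoc, Rplus_opp_l, Rplus_0_l; reflexivity).
    change (Factorial.fact 1) with 1%nat.
    replace (L ^ 1 * Rabs (x - x0) ^ 1 / INR 1) with (L * Rabs (x - x0) ^ 1 / INR 1)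
      by (simpl; field).
    apply int_bound.
    + lra.
    + intros s Hs. apply (ContF 0%nat); eauto.
    + intros s Hs. simpl pow. rewrite Rmult_1_r.
      replace (Fv n coef (fun i _ => ev n i) i s) with
        (Fv n coef (fun i _ => ev n i) i s - Fv n coef (fun _ _ => 0) i s)
        by (rewrite Fv_zero; ring).
      rewrite <- (Rmult_1_r L).
      apply (Fdiff n coef _ _ s M 1); auto.
      * intros j Hj. unfold ev. rewrite Rminus_0_r.
        destruct (Nat.eqb j (n - 1)); [rewrite Rabs_R1| rewrite Rabs_R0]; lra.
      * intros j Hj. apply HcM; eauto.
  - change (Pic n coef x0 (S (S k)) i x - Pic n coef x0 (S k) i x) with
      ((ev n i + RInt (Fv n coef (Pic n coef x0 (S k)) i) x0 x) -
       (ev n i + RInt (Fv n coef (Pic n coef x0 k) i) x0 x)).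
    replace ((ev n i + RInt (Fv n coef (Pic n coef x0 (S k)) i) x0 x) -
       (ev n i + RInt (Fv n coef (Pic n coef x0 k) i) x0 x)) with
       (minus (RInt (Fv n coef (Pic n coef x0 (S k)) i) x0 x)
              (RInt (Fv n coef (Pic n coef x0 k) i) x0 x))
      by (unfold minus, plus, opp; simpl; ring).
    rewrite <- RInt_minus by (apply ExF; auto).
    set (K := L ^ (S (S k)) / INR (Factorial.fact (S k))).
    assert (HK : 0 <= K).
    { unfold K. apply Rmult_le_pos; [apply pow_le; lra|].
      apply Rlt_le, Rinv_0_lt_compat, lt_0_INR, Factorial.lt_O_fact. }
    replace (L ^ S (S k) * Rabs (x - x0) ^ S (S k) / INR (Factorial.fact (S (S k))))
      with (K * Rabs (x - x0) ^ S (S k) / INR (S (S k))).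
    2:{ unfold K. change (Factorial.fact (S (S k))) with (S (S k) * Factorial.fact (S k))%nat.
        rewrite mult_INR. field. split.
        - apply not_0_INR. apply Nat.neq_0_lt_0, Factorial.lt_O_fact.
        - apply not_0_INR. lia. }
    apply int_bound; auto.
    + intros s Hs. apply (continuous_minus (V:=R_NormedModule)); apply ContF; eauto.
    + intros s Hs. cbv beta. change (minus ?u ?v) with (u - v).
      replace (K * Rabs (s - x0) ^ S k) with
        (L * (L ^ (S k) * Rabs (s - x0) ^ (S k) / INR (Factorial.fact (S k))))
        by (unfold K; rewrite <- (tech_pow_Rmult L (S k)); field; apply not_0_INR, Nat.neq_0_lt_0, Factorial.lt_O_fact).
      apply (Fdiff n coef _ _ s M); auto.
      * intros j Hj. apply IHk; eauto.
      * intros j Hj. apply HcM; eauto.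
Qed.


Lemma coef_bound (coef : nat -> R -> R) (lo hi : R) (m : nat) :
  lo <= hi ->
  (forall j, (j < m)%nat -> forall s, lo <= s <= hi -> continuous (coef j) s) ->
  exists M, 0 <= M /\ forall j, (j < m)%nat -> forall s, lo <= s <= hi -> Rabs (coef j s) <= M.
Proof.
  intros Hlh. induction m; intros Hc.
  - exists 0. split; [lra| intros; lia].
  - destruct IHm as [M1 [HM1 HB1]]. { intros; apply Hc; auto; lia. }
    destruct (continuity_ab_maj (fun s => Rabs (coef m s)) lo hi Hlh) as [Mx [HMx _]].
    { intros c Hcc. apply continuity_pt_filterlim. apply continuous_Rabs_comp. apply Hc; auto. }
    exists (Rmax M1 (Rabs (coef m Mx))). split.
    + eapply Rle_trans; [apply HM1| apply Rmax_l].
    + intros j Hj s Hs. destruct (Nat.eq_dec j m).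
      * subst. eapply Rle_trans; [apply HMx; auto| apply Rmax_r].
      * eapply Rle_trans; [apply HB1; auto; lia| apply Rmax_l].
Qed.

Lemma local_cvu (n : nat) (coef : nat -> R -> R) (a b : Rbar) (x0 : R) :
  (1 <= n)%nat -> in_interval a b x0 ->
  (forall i, (i < n)%nat -> forall x, in_interval a b x -> continuous (coef i) x) ->
  forall x, in_interval a b x ->
  exists d : posreal, (forall y, Boule x d y -> in_interval a b y) /\
    forall i, (i < n)%nat ->
      CVU_cauchy (fun k => Pic n coef x0 k i) (Boule x d) /\
      CVU_cauchy (fun k => Fv n coef (Pic n coef x0 k) i) (Boule x d).
Proof.
  intros Hn Hx0 Hc x Hx.
  destruct (in_interval_open a b x Hx) as [d0 [Hd0 [Hm Hp]]].
  set (lo := Rmin x0 (x - d0)). set (hi := Rmax x0 (x + d0)).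
  assert (Hlo : in_interval a b lo) by (unfold lo, Rmin; destruct (Rle_dec x0 (x - d0)); auto).
  assert (Hhi : in_interval a b hi) by (unfold hi, Rmax; destruct (Rle_dec x0 (x + d0)); auto).
  assert (Hlo1 : lo <= x0 /\ lo <= x - d0) by (split; [apply Rmin_l| apply Rmin_r]).
  assert (Hhi1 : x0 <= hi /\ x + d0 <= hi) by (split; [apply Rmax_l| apply Rmax_r]).
  assert (Iin : forall s, lo <= s <= hi -> in_interval a b s).
  { intros s Hs. apply in_interval_convex with lo hi; auto. }
  destruct (coef_bound coef lo hi n) as [M [HM HcM]]; [lra| |].
  { intros j Hj s Hs. apply Hc; auto. }
  set (L := 1 + INR n * M).
  assert (HL : 1 <= L) by (unfold L; assert (0 <= INR n * M) by (apply Rmult_le_pos; auto; apply pos_INR); lra).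
  set (c := L * (hi - lo)).
  assert (Bd : forall k y, lo <= y <= hi ->
    L ^ (S k) * Rabs (y - x0) ^ (S k) / INR (Factorial.fact (S k)) <= texp c (S k)).
  { intros k y Hy. unfold texp, c. rewrite <- Rpow_mult_distr.
    unfold Rdiv. rewrite Rmult_comm. apply Rmult_le_compat_l.
    - apply Rlt_le, Rinv_0_lt_compat, lt_0_INR, Factorial.lt_O_fact.
    - apply pow_incr. split.
      + apply Rmult_le_pos; [lra| apply Rabs_pos].
      + apply Rmult_le_compat_l; [lra|]. unfold Rabs; destruct (Rcase_abs (y - x0)); lra. }
  assert (PB := pic_bound n coef a b x0 lo hi M Hn Hx0 Hc Hlo Hhi ltac:(lra) HM HcM).
  assert (Hball : forall y, Boule x (mkposreal d0 Hd0) y -> lo <= y <= hi).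
  { intros y Hy. unfold Boule in Hy; simpl in Hy. apply Rabs_def2 in Hy. lra. }
  exists (mkposreal d0 Hd0). split.
  { intros y Hy. apply Iin; auto. }
  intros i Hi. split.
  - apply (unif_cauchy _ _ 1 c); [lra|]. intros k y Hy.
    rewrite Rmult_1_l. eapply Rle_trans; [apply PB; auto|]. apply Bd; auto.
  - apply (unif_cauchy _ _ L c); [lra|]. intros k y Hy.
    apply (Fdiff n coef _ _ y M); auto; intros j Hj;
      first [eapply Rle_trans; [apply PB; auto|]; apply Bd; auto | apply HcM; auto].
Qed.


Definition Gl (n : nat) (coef : nat -> R -> R) (x0 : R) (i : nat) (x : R) : R :=
  real (Lim_seq (fun k => Pic n coef x0 k i x)).

Lemma Gl_lim (n : nat) (coef : nat -> R -> R) (a b : Rbar) (x0 : R) :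
  (1 <= n)%nat -> in_interval a b x0 ->
  (forall i, (i < n)%nat -> forall x, in_interval a b x -> continuous (coef i) x) ->
  forall i, (i < n)%nat -> forall x, in_interval a b x ->
  is_lim_seq (fun k => Pic n coef x0 k i x) (Gl n coef x0 i x).
Proof.
  intros Hn Hx0 Hc i Hi x Hx.
  destruct (local_cvu n coef a b x0 Hn Hx0 Hc x Hx) as [d [_ Hd]].
  destruct (Hd i Hi) as [H1 _].
  apply CVU_dom_cauchy, CVU_CVS_dom in H1.
  destruct (H1 x) as [l Hl].
  { unfold Boule. rewrite Rminus_eq_0, Rabs_R0. apply cond_pos. }
  unfold Gl. rewrite (is_lim_seq_unique _ _ Hl). exact Hl.
Qed.

Lemma Gl_deriv0 (n : nat) (coef : nat -> R -> R) (a b : Rbar) (x0 : R) :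
  (1 <= n)%nat -> in_interval a b x0 ->
  (forall i, (i < n)%nat -> forall x, in_interval a b x -> continuous (coef i) x) ->
  forall i, (i < n)%nat -> forall x, in_interval a b x ->
  is_derive (Gl n coef x0 i) x (real (Lim_seq (fun k => Fv n coef (Pic n coef x0 k) i x))).
Proof.
  intros Hn Hx0 Hc i Hi x Hx.
  destruct (local_cvu n coef a b x0 Hn Hx0 Hc x Hx) as [d [Hin Hd]].
  destruct (Hd i Hi) as [H1 H2].
  apply is_derive_Reals.
  apply (CVU_derivable (fun k => Pic n coef x0 (S k) i) (fun k => Fv n coef (Pic n coef x0 k) i)
          (Gl n coef x0 i) (fun y => real (Lim_seq (fun k => Fv n coef (Pic n coef x0 k) i y))) x d).
  - assert (H2' := H2). apply CVU_dom_cauchy in H2'.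
    apply CVU_dom_Reals; auto.
    intros y Hy. destruct (CVU_CVS_dom _ _ H2' y Hy) as [l Hl].
    rewrite (is_lim_seq_unique _ _ Hl). reflexivity.
  - intros y Hy. apply is_lim_seq_Reals.
    apply (is_lim_seq_incr_1 (fun k => Pic n coef x0 k i y)).
    apply (Gl_lim n coef a b x0); auto.
  - intros k y Hy. apply is_derive_Reals.
    apply (proj2 (pic_props n coef a b x0 Hn Hx0 Hc k)); auto.
  - unfold Boule. rewrite Rminus_eq_0, Rabs_R0. apply cond_pos.
Qed.

Lemma lim_sum (m : nat) (u : nat -> nat -> R) (l : nat -> R) :
  (forall j, (j < m)%nat -> is_lim_seq (fun k => u k j) (l j)) ->
  is_lim_seq (fun k => sum_lt m (fun j => u k j)) (sum_lt m l).
Proof.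
  induction m; intros H; cbn [sum_lt].
  - apply is_lim_seq_const.
  - apply (is_lim_seq_plus' (fun k => sum_lt m (fun j => u k j)) (fun k => u k m)).
    + apply IHm; intros; apply H; lia.
    + apply H; lia.
Qed.

Lemma Gl_deriv (n : nat) (coef : nat -> R -> R) (a b : Rbar) (x0 : R) :
  (1 <= n)%nat -> in_interval a b x0 ->
  (forall i, (i < n)%nat -> forall x, in_interval a b x -> continuous (coef i) x) ->
  forall i, (i < n)%nat -> forall x, in_interval a b x ->
  is_derive (Gl n coef x0 i) x
    (if Nat.ltb i (n - 1) then Gl n coef x0 (S i) x
     else - sum_lt n (fun j => coef j x * Gl n coef x0 j x)).
Proof.
  intros Hn Hx0 Hc i Hi x Hx.
  assert (D := Gl_deriv0 n coef a b x0 Hn Hx0 Hc i Hi x Hx).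
  unfold Fv in D. destruct (Nat.ltb_spec i (n - 1)).
  - exact D.
  - replace (- sum_lt n (fun j => coef j x * Gl n coef x0 j x)) with
      (real (Lim_seq (fun k => - sum_lt n (fun j => coef j x * Pic n coef x0 k j x)))); auto.
    rewrite (is_lim_seq_unique _ (- sum_lt n (fun j => coef j x * Gl n coef x0 j x))).
    + reflexivity.
    + apply (is_lim_seq_opp _ (sum_lt n (fun j => coef j x * Gl n coef x0 j x))).
      apply (lim_sum n (fun k j => coef j x * Pic n coef x0 k j x)).
      intros j Hj. apply (is_lim_seq_scal_l _ (coef j x) (Gl n coef x0 j x)).
      apply (Gl_lim n coef a b x0); auto.
Qed.

Lemma Gl_init (n : nat) (coef : nat -> R -> R) (x0 : R) (i : nat) :
  Gl n coef x0 i x0 = ev n i.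
Proof.
  unfold Gl. rewrite (Lim_seq_ext _ (fun _ => ev n i)).
  - rewrite Lim_seq_const. reflexivity.
  - intros k. destruct k; cbn [Pic]; auto. rewrite RInt_point. apply Rplus_0_r.
Qed.


Lemma derive_sum (m : nat) (h : nat -> R -> R) (dh : nat -> R) (x : R) :
  (forall k, (k < m)%nat -> is_derive (h k) x (dh k)) ->
  is_derive (fun t => sum_lt m (fun k => h k t)) x (sum_lt m dh).
Proof.
  induction m; intros H; cbn [sum_lt].
  - apply (@is_derive_const R_AbsRing R_NormedModule).
  - apply (is_derive_plus (K:=R_AbsRing) (V:=R_NormedModule)
             (fun t => sum_lt m (fun k => h k t)) (h m)).
    + apply IHm; intros; apply H; lia.
    + apply H; lia.
Qed.


Lemma Dn_eq (n : nat) (coef : nat -> R -> R) (a b : Rbar) (x0 : R) :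
  (1 <= n)%nat -> in_interval a b x0 ->
  (forall i, (i < n)%nat -> forall x, in_interval a b x -> continuous (coef i) x) ->
  forall k, (k < n)%nat -> forall x, in_interval a b x ->
    Derive_n (Gl n coef x0 0) k x = Gl n coef x0 k x.
Proof.
  intros Hn Hx0 Hc. induction k; intros Hk x Hx.
  - reflexivity.
  - change (Derive_n (Gl n coef x0 0) (S k) x) with (Derive (Derive_n (Gl n coef x0 0) k) x).
    rewrite (Derive_ext_loc _ (Gl n coef x0 k)).
    + apply is_derive_unique.
      assert (D := Gl_deriv n coef a b x0 Hn Hx0 Hc k ltac:(lia) x Hx).
      destruct (Nat.ltb_spec k (n - 1)); [exact D| lia].
    + generalize (in_interval_locally a b x Hx). apply filter_imp.
      intros t Ht. apply IHk; auto; lia.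
Qed.

Theorem theorem2p2 (n : nat) (a b : Rbar) (coef : nat -> R -> R) :
  (1 <= n)%nat ->
  Rbar_lt a b ->
  (forall i : nat, (i < n)%nat ->
     forall x : R, in_interval a b x -> continuous (coef i) x) ->
  exists y : R -> R,
    is_solution n coef a b y /\
    lin_indep_on n (fun k => Derive_n y k) a b.
Proof.
  intros Hn Hab Hc.
  destruct (in_interval_nonempty a b Hab) as [x0 Hx0].
  set (y := Gl n coef x0 0).
  assert (DE := Dn_eq n coef a b x0 Hn Hx0 Hc).
  assert (GD := Gl_deriv n coef a b x0 Hn Hx0 Hc).
  assert (LOC : forall k, (k < n)%nat -> forall x, in_interval a b x ->
     locally x (fun t => Gl n coef x0 k t = Derive_n y k t)).
  { intros k Hk x Hx. generalize (in_interval_locally a b x Hx). apply filter_imp.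
    intros t Ht. symmetry. apply DE; auto. }
  assert (EXD : forall k, (k < n)%nat -> forall x, in_interval a b x ->
     ex_derive (Derive_n y k) x).
  { intros k Hk x Hx. apply (ex_derive_ext_loc (Gl n coef x0 k)); [apply LOC; auto|].
    eexists. apply GD; auto. }
  assert (DN : forall x, in_interval a b x ->
     Derive_n y n x = - sum_lt n (fun j => coef j x * Gl n coef x0 j x)).
  { intros x Hx. replace n with (S (n - 1)) at 1 by lia.
    change (Derive_n y (S (n - 1)) x) with (Derive (Derive_n y (n - 1)) x).
    rewrite (Derive_ext_loc _ (Gl n coef x0 (n - 1))).
    + apply is_derive_unique.
      assert (D := GD (n - 1)%nat ltac:(lia) x Hx).
      destruct (Nat.ltb_spec (n - 1) (n - 1)); [lia| exact D].
    + generalize (LOC (n - 1)%nat ltac:(lia) x Hx). apply filter_imp.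
      intros t Ht. symmetry; exact Ht. }
  exists y. split.
  - split.
    + intros k Hk x Hx. apply EXD; auto.
    + intros x Hx. rewrite DN by auto.
      rewrite (sum_lt_ext n (fun i => coef i x * Derive_n y i x)
                 (fun j => coef j x * Gl n coef x0 j x)).
      * ring.
      * intros k Hk. rewrite DE; auto.
  - intros c Hsum.
    assert (HT : forall t, (t < n)%nat -> forall x, in_interval a b x ->
       sum_lt (n - t) (fun k => c k * Derive_n y (k + t) x) = 0).
    { induction t; intros Ht x Hx.
      - rewrite Nat.sub_0_r. rewrite <- (Hsum x Hx). apply sum_lt_ext.
        intros k _. rewrite Nat.add_0_r. reflexivity.
      - assert (Hc0 : c (n - 1 - t)%nat = 0).
        { assert (E := IHt ltac:(lia) x0 Hx0).
          rewrite (sum_lt_ext _ _ (fun k => c k * (if Nat.eqb k (n - 1 - t) then 1 else 0))) in E.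
          - rewrite sum_lt_delta in E. destruct (Nat.ltb_spec (n - 1 - t) (n - t)); [exact E| lia].
          - intros k Hk. rewrite DE by (auto; lia). rewrite Gl_init. unfold ev.
            destruct (Nat.eqb_spec (k + t) (n - 1)); destruct (Nat.eqb_spec k (n - 1 - t));
              try lia; reflexivity. }
        set (g := fun x => sum_lt (n - S t) (fun k => c k * Derive_n y (k + t) x)).
        assert (G0 : forall x, in_interval a b x -> g x = 0).
        { intros z Hz. unfold g. rewrite <- (IHt ltac:(lia) z Hz).
          replace (n - t)%nat with (S (n - S t)) by lia. cbn [sum_lt].
          replace (n - S t)%nat with (n - 1 - t)%nat by lia. rewrite Hc0. ring. }
        assert (D1 : is_derive g x (sum_lt (n - S t) (fun k => c k * Derive_n y (S (k + t)) x))).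
        { apply (derive_sum _ (fun k t0 => c k * Derive_n y (k + t) t0)).
          intros k Hk. apply is_derive_scal.
          change (Derive_n y (S (k + t)) x) with (Derive (Derive_n y (k + t)) x).
          apply Derive_correct. apply EXD; auto; lia. }
        assert (D2 : is_derive g x 0).
        { apply (is_derive_ext_loc (fun _ => 0)).
          - generalize (in_interval_locally a b x Hx). apply filter_imp.
            intros z Hz. symmetry. apply G0; auto.
          - apply (@is_derive_const R_AbsRing R_NormedModule). }
        apply is_derive_unique in D1. apply is_derive_unique in D2.
        rewrite <- D2, D1. apply sum_lt_ext. intros k _.
        replace (k + S t)%nat with (S (k + t)) by lia. reflexivity. }
    intros i Hi.
    assert (E := HT (n - 1 - i)%nat ltac:(lia) x0 Hx0).
    rewrite (sum_lt_ext _ _ (fun k => c k * (if Nat.eqb k i then 1 else 0))) in E.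
    + rewrite sum_lt_delta in E. destruct (Nat.ltb_spec i (n - (n - 1 - i))); [exact E| lia].
    + intros k Hk. rewrite DE by (auto; lia). rewrite Gl_init. unfold ev.
      destruct (Nat.eqb_spec (k + (n - 1 - i)) (n - 1)); destruct (Nat.eqb_spec k i);
        try lia; reflexivity.
Qed.
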